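(* Let $d\ge 2$ and $n\ge1$, and let $H$ be a Latin hypercube of dimension $d-1$ and order $n$ (equivalently $H=\mathcal H(P)$ for some $1$-permutation matrix $P\in\Lambda_1(d,n)$). Let $T=\{\alpha_1,\dots,\alpha_n\}$ be a transversal of $H$. Then \[\sum_{i=1}^n \Delta(\alpha_i)\equiv\begin{cases} 0 \pmod n&\text{if } n \text{ is odd or } d \text{ is even,}\\ n/2 \pmod n&\text{otherwise}.\end{cases}\]
   Context: Let $I_n=\{1,\dots,n\}$. A Latin hypercube of dimension $m$ and order $n$ is a function $H:I_n^m\to I_n$ such that along every line (varying one coordinate while fixing the others) each symbol of $I_n$ appears exactly once. A $1$-permutation matrix $P\in\Lambda_1(d,n)$ is a $(0,1)$-valued function on $I_n^d$ with exactly one $1$ in each line; it corresponds to the Latin hypercube $\mathcal H(P)$ of dimension $d-1$ with $\mathcal H(P)(i_1,\dots,i_{d-1})=i_d$ iff $P(i_1,\dots,i_d)=1$. A transversal of a Latin hypercube $H$ of dimension $m$ and order $n$ is a selection of $n$ cells of $H$, any two of which differ in every coordinate and contain different symbols. For a cell $\alpha$ at position $(i_1,\dots,i_m)$ of $H$ containing symbol $e=H(i_1,\dots,i_m)$, the Delta function is $\Delta(\alpha)\equiv e-i_1-\cdots-i_m \pmod n$. *)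

(* Defs.v *)
From mathcomp Require Import all_boot all_order all_algebra.
Set Implicit Arguments. Unset Strict Implicit. Unset Printing Implicit Defensive.
Import GRing.Theory Num.Theory.

(* Cells of a hypercube of dimension m and order n: functions 'I_m -> 'I_n.
   Coordinates/symbols are stored 0-based: the value i : 'I_n stands for i+1 in I_n. *)
Definition cell (m n : nat) := {ffun 'I_m -> 'I_n}.

Definition upd (m n : nat) (x : cell m n) (k : 'I_m) (v : 'I_n) : cell m n :=
  [ffun j => if j == k then v else x j].

Definition latin_hypercube (m n : nat) (H : cell m n -> 'I_n) : Prop :=
  forall (x : cell m n) (k : 'I_m) (s : 'I_n),
    #|[set v : 'I_n | H (upd x k v) == s]| = 1.

Definition hc_transversal (m n : nat) (H : cell m n -> 'I_n) (T : {set cell m n}) : Prop :=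
  #|T| = n /\
  forall a b, a \in T -> b \in T -> a != b ->
    (forall k : 'I_m, a k != b k) /\ H a != H b.

Definition Delta (m n : nat) (H : cell m n -> 'I_n) (a : cell m n) : int :=
  ((((H a).+1 : int) - \sum_(k < m) ((a k).+1 : int))%R %% (n : int))%Z.

(* Main.v *)
Require Import Defs.
From mathcomp Require Import all_boot all_order all_algebra.
From mathcomp Require Import ring lra zify.
Import GRing.Theory Num.Theory.
Local Open Scope ring_scope.

Lemma sum_inj (m n : nat) (T : {set cell m n}) (f : cell m n -> 'I_n)
  (hT : #|T| = n) (inj : {in T &, injective f}) :
  \sum_(a in T) (((f a).+1 : nat) : int) = \sum_(i < n) ((i.+1 : nat) : int).
Proof.
rewrite -(big_imset (fun i : 'I_n => ((i.+1 : nat) : int)) inj) /=.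
have -> : f @: T = setT.
  apply/eqP; rewrite eqEcard subsetT cardsT card_ord card_in_imset // hT leqnn //=.
by apply: eq_bigl => i; rewrite in_setT.
Qed.

Lemma gauss (n : nat) : (\sum_(i < n) ((i.+1 : nat) : int)) * 2 = (n : int) * (n + 1)%N.
Proof.
elim: n => [|n IH]; first by rewrite big_ord0.
rewrite big_ord_recr /= mulrDl IH.
rewrite !PoszD. ring.
Qed.

Lemma sum_mod (I : finType) (A : pred I) (x : I -> int) (n : int) :
  ((\sum_(a in A) (x a %% n)%Z) %% n)%Z = ((\sum_(a in A) x a) %% n)%Z.
Proof.
apply: (big_rec2 (fun y1 y2 => (y1 %% n)%Z = (y2 %% n)%Z)) => // a y1 y2 _ Hy.
by rewrite modzDml -modzDmr Hy modzDmr.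
Qed.

Local Close Scope ring_scope.

Theorem lemma2p4 (d n : nat) (hd : 2 <= d) (hn : 1 <= n)
  (H : cell d.-1 n -> 'I_n) (hH : latin_hypercube H)
  (T : {set cell d.-1 n}) (hT : hc_transversal H T) :
  ((\sum_(a in T) Delta H a)%R %% (n : int))%Z =
  (if odd n || ~~ odd d then 0%Z else ((n./2)%N : int)).
Proof.
Local Open Scope ring_scope.
case: hT => cT hT.
rewrite /Delta sum_mod sumrB exchange_big /=.
rewrite (@sum_inj _ _ T H cT); last first.
  move=> a b aT bT Hab; apply/eqP/negPn/negP => nab.
  by case: (hT a b aT bT nab) => _; rewrite Hab eqxx.
set N := \sum_(i < n) _.
have HN := gauss n; rewrite -/N in HN.
have -> : \sum_(k < d.-1) \sum_(a in T) (((a k).+1 : nat) : int) = N *+ d.-1.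
  transitivity (\sum_(k < d.-1) N); last by rewrite sumr_const card_ord.
  apply: eq_bigr => k _; apply: (@sum_inj _ _ T (fun a => a k) cT) => //.
  move=> a b aT bT Hab; apply/eqP/negPn/negP => nab.
  by case: (hT a b aT bT nab) => /(_ k); rewrite Hab eqxx.
rewrite -mulr_natr natz.
set m := d.-1.
have two0 : (2 : int) != 0 by [].
have e := odd_double_half n.
case: (boolP (odd n)) => on /=.
- rewrite on /= add1n in e.
  set k := n./2 in e.
  have -> : N - N * (m : int) = (((k + 1)%N : int) * (1 - (m:int))) * (n : int) + 0.
    apply: (mulIf two0).
    have -> : (N - N * (m:int)) * 2 = (N*2) * (1 - (m:int)) by ring.
    rewrite HN -e -addn1 -muln2 !PoszD PoszM. ring.
  by rewrite modzMDl mod0z.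
- rewrite (negbTE on) add0n in e.
  set k := n./2 in e.
  have kn : (0 < k)%N by lia.
  have ed := odd_double_half m.
  have dm : d = m.+1 by rewrite /m; lia.
  have -> : (~~ odd d) = odd m by rewrite dm /= negbK.
  set j := m./2 in ed.
  case: (boolP (odd m)) => om /=.
  + rewrite om /= add1n in ed.
    have -> : N - N * (m : int) = (- (j:int) * ((n + 1)%N : int)) * (n : int) + 0.
      apply: (mulIf two0).
      have -> : (N - N * (m:int)) * 2 = (N*2) * (1 - (m:int)) by ring.
      rewrite HN -ed -addn1 -muln2 !PoszD ?PoszM. ring.
    by rewrite modzMDl mod0z.
  + rewrite (negbTE om) add0n in ed.
    have -> : N - N * (m : int) = ((k:int) * (1 - 2 * (j:int)) - (j:int)) * (n : int) + (k:int).
      apply: (mulIf two0).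
      have -> : (N - N * (m:int)) * 2 = (N*2) * (1 - (m:int)) by ring.
      rewrite HN -ed -e -!muln2 !PoszD ?PoszM. ring.
    rewrite modzMDl modz_small //; apply/andP; split => //.
    rewrite -e ltz_nat; lia.
Qed.
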